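(* Let $S$ be a square-free semigroup with idempotent set $E$, $D$ a division ring, and let $(\alpha,\xi),(\beta,\zeta)\in Z^2(S,D^* )$ be normal 2-cocycles. Let $\gamma: D^{\beta}_{\zeta}S\to D^{\alpha}_{\xi}S$ be a ring isomorphism with $\gamma(E)=E$. Then there exist an automorphism $\phi$ of the semigroup $S$ and $(\mu,\eta)\in F^0(S,\mathrm{Aut}(D))\times F^1(S,D^* )$ such that $\gamma(ds)=\mu_e(d)\,\eta(s)\,\phi(s)$ for all $d\in D$ and all $s=e\cdot s\cdot f\in S^*$.
   Context: $D$ is a division ring, $D^*$ its group of units, $\mathrm{Aut}(D)$ its group of ring automorphisms, and for $d\in D^*$, $\rho_d(x)=dxd^{-1}$. A square-free semigroup is a semigroup $S$ (product $s\cdot t$) with zero $\theta$ together with a finite set $E\subseteq S$ of nonzero pairwise orthogonal idempotents such that $S=\bigcup_{e,f\in E}e\cdot S\cdot f$ and $|e\cdot S\cdot f\setminus\{\theta\}|\le 1$ for all $e,f\in E$. $S^*=S\setminus\{\theta\}$; each $s\in S^*$ satisfies $s=e\cdot s\cdot f$ for unique $e,f\in E$. Put $S^{<0>}=E$, $S^{<n>}=\{(s_1,\dots,s_n)\in S^n: s_1\cdots s_n\ne\theta\}$; $F^n(S,G)$ is the group of functions $S^{<n>}\to G$. Write $\alpha_s=\alpha(s)$, $\mu_e=\mu(e)$. A 2-cocycle is a pair $(\alpha,\xi)\in F^1(S,\mathrm{Aut}(D))\times F^2(S,D^* )$ with $\alpha_s(\xi(t,u))\xi(s,t\cdot u)=\xi(s,t)\xi(s\cdot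 t,u)$ for $(s,t,u)\in S^{<3>}$ and $\alpha_s\circ\alpha_t=\rho_{\xi(s,t)}\circ\alpha_{s\cdot t}$ for $(s,t)\in S^{<2>}$; $Z^2(S,D^* )$ is their set. It is normal if $\alpha_e=1_D$ and $\xi(e,e)=1$ for all $e\in E$. For $(\alpha,\xi)\in Z^2(S,D^* )$, $D^{\alpha}_{\xi}S$ is the ring which is the left $D$-vector space with basis $S^*$ and multiplication extended by distributivity from $(d_1s)(d_2t)=d_1\alpha_s(d_2)\xi(s,t)\,(s\cdot t)$ if $s\cdot t\ne\theta$ and $0$ otherwise; $E$ is regarded as a subset of this ring. *)

(* Defs.v *)
From HB Require Import structures.
From mathcomp Require Import all_boot all_order all_algebra.
Set Implicit Arguments. Unset Strict Implicit. Unset Printing Implicit Defensive.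
Import GRing.Theory.
Local Open Scope ring_scope.

Definition division_ring (D : unitRingType) : Prop :=
  forall x : D, x != 0 -> x \is a GRing.unit.

Definition ring_aut (D : unitRingType) (g : D -> D) : Prop :=
  [/\ forall x y, g (x + y) = g x + g y,
      forall x y, g (x * y) = g x * g y,
      g 1 = 1 & bijective g].

Definition square_free (S : finType) (mul : S -> S -> S) (theta : S) (E : {set S}) : Prop :=
  associative mul /\
  [/\ (forall s, mul theta s = theta /\ mul s theta = theta),
      (forall e, e \in E -> e != theta /\ mul e e = e),
      (forall e f, e \in E -> f \in E -> e != f -> mul e f = theta),
      (forall s, exists e f t, [/\ e \in E, f \in E & s = mul (mul e t) f])
    & (forall e f s t, e \in E -> f \in E ->
         mul (mul e s) f != theta -> mul (mul e t) f != theta ->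
         mul (mul e s) f = mul (mul e t) f)].

Definition semigroup_aut (S : Type) (mul : S -> S -> S) (phi : S -> S) : Prop :=
  bijective phi /\ forall s t, phi (mul s t) = mul (phi s) (phi t).

(* 2-cocycles (alpha, xi) in Z^2(S, D^x); functions are total, conditions are
   imposed on S^<1>, S^<2>, S^<3> only. *)
Definition cocycle2 (S : finType) (mul : S -> S -> S) (theta : S) (D : unitRingType)
  (al : S -> D -> D) (xi : S -> S -> D) : Prop :=
  [/\ forall s, s != theta -> ring_aut (al s),
      forall s t, mul s t != theta -> xi s t \is a GRing.unit,
      forall s t u, mul (mul s t) u != theta ->
        al s (xi t u) * xi s (mul t u) = xi s t * xi (mul s t) u
    & forall s t, mul s t != theta -> forall x,
        al s (al t x) = xi s t * al (mul s t) x * (xi s t)^-1].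

Definition normal_cocycle (S : finType) (E : {set S}) (D : unitRingType)
  (al : S -> D -> D) (xi : S -> S -> D) : Prop :=
  forall e, e \in E -> al e =1 id /\ xi e e = 1.

(* S^* and the twisted semigroup ring D^al_xi S, as D-coefficient vectors on S^* *)
Definition Sstar (S : finType) (theta : S) : finType := {s : S | s != theta}.

Definition twisted (S : finType) (theta : S) (D : unitRingType) :=
  {ffun Sstar theta -> D}.

(* d s, for s : S (zero vector if s = theta) *)
Definition sing (S : finType) (theta : S) (D : unitRingType) (s : S) (d : D)
  : twisted theta D :=
  [ffun u : Sstar theta => if val u == s then d else 0].

Definition tmul (S : finType) (mul : S -> S -> S) (theta : S) (D : unitRingType)
  (al : S -> D -> D) (xi : S -> S -> D) (x y : twisted theta D) : twisted theta D :=
  [ffun u : Sstar theta =>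
     \sum_(s : Sstar theta) \sum_(t : Sstar theta)
        (if mul (val s) (val t) == val u
         then x s * al (val s) (y t) * xi (val s) (val t) else 0)].

Definition tone (S : finType) (theta : S) (E : {set S}) (D : unitRingType)
  : twisted theta D :=
  [ffun u : Sstar theta => if val u \in E then 1 else 0].

Definition ring_iso (S : finType) (theta : S) (E : {set S}) (D : unitRingType)
  (m1 m2 : twisted theta D -> twisted theta D -> twisted theta D)
  (g : twisted theta D -> twisted theta D) : Prop :=
  [/\ forall x y, g (x + y) = g x + g y,
      forall x y, g (m1 x y) = m2 (g x) (g y),
      g (tone theta E D) = tone theta E D
    & bijective g].

(* Main.v *)
Require Import Defs.
From HB Require Import structures.
From mathcomp Require Import all_boot all_order all_algebra.
Import GRing.Theory.
Local Open Scope ring_scope.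
Set Implicit Arguments. Unset Strict Implicit.

Section Gen.
Variables (S : finType) (mul : S -> S -> S) (theta : S) (D : unitRingType).
Variables (al : S -> D -> D) (xi : S -> S -> D).
Hypothesis mulT : forall s, mul theta s = theta /\ mul s theta = theta.
Hypothesis al0 : forall s, s != theta -> al s 0 = 0.

Lemma sum_pick (F : Sstar theta -> D) (u0 : Sstar theta) :
  \sum_u (if val u == val u0 then F u else 0) = F u0.
Proof.
rewrite (bigD1 u0) //= eqxx big1 ?addr0 // => u /negbTE.
by rewrite val_eqE => ->.
Qed.

Lemma singT (d : D) : sing theta theta d = 0.
Proof. apply/ffunP => u; rewrite !ffunE; by case: u => u /= /negbTE ->. Qed.

Lemma sing0 s : sing theta s (0 : D) = 0.
Proof. apply/ffunP => u; rewrite !ffunE; by case: ifP. Qed.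

Lemma singD s (a b : D) : sing theta s (a + b) = sing theta s a + sing theta s b.
Proof. apply/ffunP => u; rewrite !ffunE; case: ifP => //; by rewrite addr0. Qed.

Lemma sing_supp s (d : D) u : sing theta s d u != 0 -> val u = s.
Proof. rewrite ffunE; case: ifP => [/eqP//|]; by rewrite eqxx. Qed.

Lemma singE s (d : D) (hs : s != theta) : sing theta s d (exist _ s hs) = d.
Proof. by rewrite ffunE /= eqxx. Qed.

Lemma sing_at (u : Sstar theta) (d : D) : sing theta (val u) d u = d.
Proof. by rewrite ffunE eqxx. Qed.

Lemma sing_neq0 s (d : D) : s != theta -> d != 0 -> sing theta s d != 0.
Proof.
move=> hs hd; apply/eqP => /ffunP /(_ (exist _ s hs)).
by rewrite singE ffunE => /eqP; rewrite (negbTE hd).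
Qed.

Lemma sing_inj s s' (d d' : D) : s != theta -> d != 0 ->
  sing theta s d = sing theta s' d' -> s = s' /\ d = d'.
Proof.
move=> hs hd E1.
have := singE d hs; rewrite E1 => h.
have hs' : s = s'.
  apply/eqP; apply: contraLR hd; rewrite negbK => ne.
  by rewrite -h ffunE /= eq_sym (negbTE ne).
split=> //; by rewrite -h ffunE /= hs' eqxx.
Qed.

Lemma tmul_sing s t (a b : D) :
  tmul mul al xi (sing theta s a) (sing theta t b) =
  sing theta (mul s t) (a * al s b * xi s t).
Proof.
have [->|hs] := eqVneq s theta.
  rewrite singT (proj1 (mulT t)) singT; apply/ffunP => u; rewrite !ffunE.
  by apply: big1 => i _; apply: big1 => j _; rewrite !ffunE mul0r mul0r if_same.
have [->|ht] := eqVneq t theta.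
  rewrite singT (proj2 (mulT s)) singT; apply/ffunP => u; rewrite !ffunE.
  apply: big1 => i _; apply: big1 => j _; rewrite !ffunE al0 ?mulr0 ?mul0r ?if_same //.
  exact: (valP i).
apply/ffunP => u; rewrite !ffunE.
pose s0 : Sstar theta := exist _ s hs; pose t0 : Sstar theta := exist _ t ht.
rewrite (bigD1 s0) //= [X in _ + X]big1 ?addr0; last first.
  move=> i ne; apply: big1 => j _; rewrite !ffunE.
  have -> : (val i == s) = false.
    by apply/negbTE; apply: contra ne => /eqP h; apply/eqP/val_inj.
  by rewrite !mul0r if_same.
rewrite (bigD1 t0) //= [X in _ + X]big1 ?addr0; last first.
  move=> j ne; rewrite !ffunE.
  have -> : (val j == t) = false.
    by apply/negbTE; apply: contra ne => /eqP h; apply/eqP/val_inj.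
  by rewrite al0 // mulr0 mul0r if_same.
rewrite !ffunE !eqxx eq_sym; by [].
Qed.

Lemma sum_neq0 (I : finType) (F : I -> D) : \sum_i F i != 0 -> exists i, F i != 0.
Proof.
move=> h; apply/existsP; apply: contraR h; rewrite negb_exists => /forallP H.
by apply/eqP; apply: big1 => i _; apply/eqP; have := H i; rewrite negbK.
Qed.

Lemma tmul_supp (x y : twisted theta D) u : tmul mul al xi x y u != 0 ->
  exists s t, [/\ mul (val s) (val t) = val u, x s != 0 & y t != 0].
Proof.
rewrite ffunE => /sum_neq0 [s /sum_neq0 [t]].
case: ifP => [/eqP e h|]; last by rewrite eqxx.
exists s, t; split => //.
  by apply: contra h => /eqP ->; rewrite !mul0r.
by apply: contra h => /eqP ->; rewrite al0 ?(valP s) // mulr0 mul0r.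
Qed.

End Gen.

Lemma ring_aut0 (D : unitRingType) (g : D -> D) : ring_aut g -> g 0 = 0.
Proof. case=> add _ _ _; apply: (addrI (g 0)); by rewrite addr0 -add addr0. Qed.

Lemma ring_aut_unit (D : unitRingType) (g : D -> D) x :
  ring_aut g -> x \is a GRing.unit -> g x \is a GRing.unit.
Proof.
case=> _ m o _ hx; apply/unitrP; exists (g x^-1).
by rewrite -!m mulVr // mulrV // o.
Qed.

Lemma unit_neq0 (D : unitRingType) (x : D) : x \is a GRing.unit -> x != 0.
Proof. by apply: contraTneq => ->; rewrite unitr0. Qed.

Section Gen2.
Variables (S : finType) (mul : S -> S -> S) (theta : S) (E : {set S}) (D : unitRingType).
Variables (al : S -> D -> D) (xi : S -> S -> D).
Hypothesis Hsf : square_free mul theta E.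
Hypothesis Hco : cocycle2 mul theta al xi.
Hypothesis Hno : normal_cocycle E al xi.

Lemma sf_assoc : associative mul. Proof. by case: Hsf. Qed.
Lemma sf_zero s : mul theta s = theta /\ mul s theta = theta.
Proof. by case: Hsf => _ [h _ _ _ _]; apply: h. Qed.
Lemma sf_idem e : e \in E -> e != theta /\ mul e e = e.
Proof. by case: Hsf => _ [_ h _ _ _]; apply: h. Qed.
Lemma sf_uniq e f s t : e \in E -> f \in E ->
  mul (mul e s) f != theta -> mul (mul e t) f != theta ->
  mul (mul e s) f = mul (mul e t) f.
Proof. by case: Hsf => _ [_ _ _ _ h]; apply: h. Qed.

Lemma sf_left e s f : e \in E -> s = mul (mul e s) f -> mul e s = s.
Proof.
move=> he hs; rewrite {1}hs sf_assoc sf_assoc (proj2 (sf_idem he)).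
by rewrite -hs.
Qed.
Lemma sf_right e s f : f \in E -> s = mul (mul e s) f -> mul s f = s.
Proof.
move=> hf hs; rewrite {1}hs -sf_assoc (proj2 (sf_idem hf)) -hs //.
Qed.

Lemma sf_decomp s : exists e f, [/\ e \in E, f \in E & s = mul (mul e s) f].
Proof.
case: Hsf => _ [_ _ _ dec _].
have [e [f [t [he hf hs]]]] := dec s.
exists e, f; split => //.
have l : mul e s = s.
  by rewrite hs !sf_assoc (proj2 (sf_idem he)).
have r : mul s f = s.
  by rewrite hs -sf_assoc (proj2 (sf_idem hf)).
by rewrite l r.
Qed.

Lemma co_al0 s : s != theta -> al s 0 = 0.
Proof. by case: Hco => h _ _ _ hs; apply: ring_aut0; apply: h. Qed.

Lemma co_xil e t : e \in E -> t != theta -> mul e t = t -> xi e t = 1.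
Proof.
move=> he ht het; case: Hco => _ un coc _.
have [hid hee] := Hno he.
have := coc e e t; rewrite (proj2 (sf_idem he)) het hid hee mul1r => /(_ ht) h.
apply: (mulIr (un e t _)); first by rewrite het.
by rewrite mul1r.
Qed.

Lemma co_xir s f : f \in E -> s != theta -> mul s f = s -> xi s f = 1.
Proof.
move=> hf hs hsf; case: Hco => aut un coc _.
have [hid hee] := Hno hf.
have := coc s f f; rewrite (proj2 (sf_idem hf)) !hsf hee => /(_ hs).
have [_ _ o _] := aut s hs; rewrite o mul1r => h.
apply: (mulrI (un s f _)); first by rewrite hsf.
by rewrite mulr1.
Qed.

Lemma SUPP e f (y : twisted theta D) u : e \in E -> f \in E ->
  y = tmul mul al xi (sing theta e 1) (tmul mul al xi y (sing theta f 1)) ->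
  y u != 0 -> exists a, val u = mul (mul e a) f.
Proof.
move=> he hf hy; rewrite hy => /(tmul_supp co_al0) [s1 [t1 [h1 n1 n2]]].
move: n1 => /sing_supp hs1.
have [s2 [t2 [h3 n3 n4]]] := tmul_supp co_al0 n2.
move: n4 => /sing_supp ht2.
exists (val s2); by rewrite -h1 hs1 -h3 ht2 sf_assoc.
Qed.

Lemma REPg e f (y : twisted theta D) (t0 : Sstar theta) : e \in E -> f \in E ->
  y = tmul mul al xi (sing theta e 1) (tmul mul al xi y (sing theta f 1)) ->
  (exists a, val t0 = mul (mul e a) f) ->
  y = sing theta (val t0) (y t0).
Proof.
move=> he hf hy [a ha]; apply/ffunP => u; rewrite ffunE.
case: (eqVneq u t0) => [->|ne]; first by rewrite eqxx.
have -> : (val u == val t0) = false by rewrite val_eqE; apply/negbTE.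
apply/eqP; apply: contraNT ne => nz.
have [b hb] := SUPP he hf hy nz.
apply/eqP/val_inj; rewrite hb ha; apply: sf_uniq => //.
  by rewrite -hb (valP u).
by rewrite -ha (valP t0).
Qed.

End Gen2.

Section Main.
Variables (S : finType) (mul : S -> S -> S) (theta : S) (E : {set S})
  (D : unitRingType) (al : S -> D -> D) (xi : S -> S -> D)
  (be : S -> D -> D) (ze : S -> S -> D)
  (gamma : twisted theta D -> twisted theta D).
Hypothesis Hsf : square_free mul theta E.
Hypothesis Hdr : division_ring D.
Hypothesis Hca : cocycle2 mul theta al xi.
Hypothesis Hna : normal_cocycle E al xi.
Hypothesis Hcb : cocycle2 mul theta be ze.
Hypothesis Hnb : normal_cocycle E be ze.
Hypothesis Hiso : ring_iso E (tmul mul be ze) (tmul mul al xi) gamma.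
Hypothesis HE : forall e, e \in E -> exists2 f, f \in E & gamma (sing theta e 1) = sing theta f 1.

Lemma Gadd x y : gamma (x + y) = gamma x + gamma y. Proof. by case: Hiso. Qed.
Lemma Gmul x y : gamma (tmul mul be ze x y) = tmul mul al xi (gamma x) (gamma y).
Proof. by case: Hiso. Qed.
Lemma Gbij : bijective gamma. Proof. by case: Hiso. Qed.
Lemma Ginj : injective gamma. Proof. exact: bij_inj Gbij. Qed.
Lemma G0 : gamma 0 = 0.
Proof. apply: (addrI (gamma 0)); by rewrite addr0 -Gadd addr0. Qed.

Let sz := sf_zero Hsf.
Let alz := co_al0 Hca.
Let bez := co_al0 Hcb.

Lemma fixB s e f d : s != theta -> e \in E -> f \in E -> s = mul (mul e s) f ->
  sing theta s d = tmul mul be ze (sing theta e 1) (tmul mul be ze (sing theta s d) (sing theta f 1)).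
Proof.
move=> hs he hf hsd.
have hr := sf_right Hsf hf hsd; have hl := sf_left Hsf he hsd.
rewrite (tmul_sing ze sz bez s f) hr.
have [aut _ _ _] := Hcb; have [_ _ o _] := aut s hs.
rewrite o (co_xir Hsf Hcb Hnb hf hs hr) !mulr1.
rewrite (tmul_sing ze sz bez e s) hl (co_xil Hsf Hcb Hnb he hs hl).
by rewrite (proj1 (Hnb he)) mul1r mulr1.
Qed.

Lemma fixA s e f : s != theta -> e \in E -> f \in E -> s = mul (mul e s) f ->
  exists e' f', [/\ e' \in E, f' \in E & forall d, gamma (sing theta s d) =
    tmul mul al xi (sing theta e' 1) (tmul mul al xi (gamma (sing theta s d)) (sing theta f' 1))].
Proof.
move=> hs he hf hsd.
have [e' he' Ge] := HE he; have [f' hf' Gf] := HE hf.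
exists e', f'; split => // d.
by rewrite {1}(fixB d hs he hf hsd) !Gmul Ge Gf.
Qed.

Lemma REP s d u1 : s != theta -> gamma (sing theta s 1) u1 != 0 ->
  gamma (sing theta s d) = sing theta (val u1) (gamma (sing theta s d) u1).
Proof.
move=> hs nz.
have [e [f [he hf hsd]]] := sf_decomp Hsf s.
have [e' [f' [he' hf' H]]] := fixA hs he hf hsd.
apply: (REPg Hsf Hca he' hf' (H d)).
exact: (SUPP Hsf Hca he' hf' (H 1) nz).
Qed.

Definition pk s := [pick u | gamma (sing theta s 1) u != 0].
Definition phi s := if pk s is Some u then val u else theta.
Definition eta s := if pk s is Some u then gamma (sing theta s 1) u else 1.
Definition mu s d := if pk s is Some u then gamma (sing theta s d) u else d.

Lemma pk_some s : s != theta -> exists u, pk s = Some u /\ gamma (sing theta s 1) u != 0.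
Proof.
move=> hs; rewrite /pk; case: pickP => [u h|h]; first by exists u.
exfalso.
have : gamma (sing theta s 1) = gamma 0.
  rewrite G0; apply/ffunP => u; rewrite ffunE; apply/eqP.
  by have := h u; move/negbFE.
move/Ginj/eqP; apply/negP; exact: sing_neq0 hs (oner_neq0 D).
Qed.

Lemma pk_theta : pk theta = None.
Proof. rewrite /pk; case: pickP => [u|//]; by rewrite singT G0 ffunE eqxx. Qed.

Lemma phi_theta : phi theta = theta.
Proof. by rewrite /phi pk_theta. Qed.

Lemma GS1 s : s != theta ->
  [/\ gamma (sing theta s 1) = sing theta (phi s) (eta s), eta s != 0 & phi s != theta].
Proof.
move=> hs; have [u [hp nz]] := pk_some hs.
rewrite /phi /eta hp; split => //; last exact: (valP u).
exact: REP.
Qed.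

Lemma MUe e : e \in E -> exists v : Sstar theta,
  [/\ gamma (sing theta e 1) = sing theta (val v) 1, val v \in E &
      forall d, gamma (sing theta e d) = sing theta (val v) (mu e d)].
Proof.
move=> he; have [e' he' Ge] := HE he.
have he0 := proj1 (sf_idem Hsf he).
have [v [hp nz]] := pk_some he0.
have ve : val v = e' by move: nz; rewrite Ge; apply: sing_supp.
exists v; rewrite ve; split => // d.
by rewrite /mu hp -ve; apply: REP.
Qed.

Lemma MC s e d : s != theta -> e \in E -> mul e s = s ->
  gamma (sing theta s d) = sing theta (phi s) (mu e d * eta s).
Proof.
move=> hs he hes.
have [v [G1 vE Gd]] := MUe he.
have [Gs ne nph] := GS1 hs.
have H : forall d, gamma (sing theta s d) = sing theta (mul (val v) (phi s))
    (mu e d * al (val v) (eta s) * xi (val v) (phi s)).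
  move=> d'.
  have -> : sing theta s d' = tmul mul be ze (sing theta e d') (sing theta s 1).
    rewrite (tmul_sing ze sz bez e s) hes (co_xil Hsf Hcb Hnb he hs hes).
    by rewrite (proj1 (Hnb he)) !mulr1.
  by rewrite Gmul Gd Gs (tmul_sing xi sz alz).
have mu1 : mu e 1 = 1.
  have h := congr1 (fun y : twisted theta D => y v) (Gd 1); rewrite /= G1 !sing_at in h; by rewrite -h.
have hv : mul (val v) (phi s) = phi s.
  have := H 1; rewrite Gs mu1 => /(sing_inj nph ne) [] <- //.
rewrite H hv (proj1 (Hna vE)) (co_xil Hsf Hca Hna vE nph hv) mulr1 //.
Qed.

Lemma MU_aut e : e \in E -> ring_aut (mu e).
Proof.
move=> he; have [v [G1 vE Gd]] := MUe he.
have he0 := proj1 (sf_idem Hsf he).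
have hv0 := proj1 (sf_idem Hsf vE).
have ext : forall a b : D, sing theta (val v) a = sing theta (val v) b -> a = b.
  move=> a b h; have := congr1 (fun y : twisted theta D => y v) h; by rewrite /= !sing_at.
split.
- move=> x y; apply: ext; by rewrite -Gd singD Gadd !Gd -singD.
- move=> x y; apply: ext; rewrite -Gd.
  have -> : sing theta e (x * y) = tmul mul be ze (sing theta e x) (sing theta e y).
    by rewrite (tmul_sing ze sz bez) (proj2 (sf_idem Hsf he)) (proj1 (Hnb he)) (proj2 (Hnb he)) mulr1.
  by rewrite Gmul !Gd (tmul_sing xi sz alz) (proj2 (sf_idem Hsf vE)) (proj1 (Hna vE)) (proj2 (Hna vE)) mulr1.
- apply: ext; by rewrite -Gd G1.
have [Gi c1 c2] := Gbij.
pose w : Sstar theta := exist _ e he0.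
exists (fun d => Gi (sing theta (val v) d) w).
- move=> x /=; by rewrite -Gd c1 singE.
- move=> d /=; set y := Gi _.
  have hy : y = tmul mul be ze (sing theta e 1) (tmul mul be ze y (sing theta e 1)).
    apply: Ginj; rewrite !Gmul G1 /y c2.
    rewrite (tmul_sing xi sz alz) (proj2 (sf_idem Hsf vE)) (proj2 (Hna vE)).
    have [aut _ _ _] := Hca; have [_ _ o _] := aut _ hv0.
    rewrite o (tmul_sing xi sz alz) (proj2 (sf_idem Hsf vE)) (proj2 (Hna vE)) (proj1 (Hna vE)).
    by rewrite !mulr1 mul1r.
  have ey : y = sing theta e (y w).
    have ex : exists a, val w = mul (mul e a) e.
      by exists e; rewrite /= !(proj2 (sf_idem Hsf he)).
    exact: (REPg Hsf Hcb he he hy ex).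
  apply: ext; rewrite -Gd -ey /y c2 //.
Qed.

Lemma eta_unit s : s != theta -> eta s \is a GRing.unit.
Proof. by move=> hs; have [_ ne _] := GS1 hs; apply: Hdr. Qed.

Lemma phi_neq s : s != theta -> phi s != theta.
Proof. by move=> hs; have [_ _ ->] := GS1 hs. Qed.

Lemma phi_mul s t : phi (mul s t) = mul (phi s) (phi t).
Proof.
have [->|hs] := eqVneq s theta.
  by rewrite (proj1 (sz t)) phi_theta (proj1 (sz _)).
have [->|ht] := eqVneq t theta.
  by rewrite (proj2 (sz s)) phi_theta (proj2 (sz _)).
have [Gs nes nphs] := GS1 hs; have [Gt net npht] := GS1 ht.
have [aut un _ _] := Hca.
have cu : mul (phi s) (phi t) != theta ->
    eta s * al (phi s) (eta t) * xi (phi s) (phi t) \is a GRing.unit.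
  move=> hm; rewrite unitrMl ?un // unitrMr ?eta_unit //.
  by apply: ring_aut_unit; [apply: aut | apply: eta_unit].
have key : gamma (sing theta (mul s t) (1 * be s 1 * ze s t)) =
    sing theta (mul (phi s) (phi t)) (eta s * al (phi s) (eta t) * xi (phi s) (phi t)).
  by rewrite -(tmul_sing ze sz bez) Gmul Gs Gt (tmul_sing xi sz alz).
have [hst|hst] := eqVneq (mul s t) theta.
  rewrite hst phi_theta; move: key; rewrite hst singT G0 => key.
  apply/esym/eqP; apply: contraT => hm.
  have := sing_neq0 hm (unit_neq0 (cu hm)); by rewrite -key eqxx.
have [aub unb _ _] := Hcb; have [_ _ o _] := aub s hs.
have zn : 1 * be s 1 * ze s t != 0 by rewrite o !mul1r; apply: unit_neq0; apply: unb.
have [u [hp nz]] := pk_some hst.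
have hm : mul (phi s) (phi t) != theta.
  apply/negP => /eqP hm; move: key; rewrite hm singT -G0 => /Ginj h.
  by move: (sing_neq0 hst zn); rewrite h eqxx.
move: key; rewrite (REP _ hst nz) => /esym /(sing_inj hm (unit_neq0 (cu hm))) [] -> _.
by rewrite /phi hp.
Qed.

Lemma phi_inj : injective phi.
Proof.
move=> s s' eq.
have [hs|hs] := eqVneq s theta.
  apply/eqP; apply: contraT => ne; move: eq; rewrite hs phi_theta => eq.
  by have := phi_neq (s:=s'); rewrite -eq eqxx; case/(_ _)/negP => //; rewrite eq_sym -hs.
have [hs'|hs'] := eqVneq s' theta.
  by move: eq; rewrite hs' phi_theta => eq; have := phi_neq hs; rewrite eq eqxx.
have [e [f [he hf hsd]]] := sf_decomp Hsf s.
have hl := sf_left Hsf he hsd.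
have [_ _ _ [hinv _ c2]] := MU_aut he.
have [Gs' _ _] := GS1 hs'.
have := MC (hinv (eta s' / eta s)) hs he hl.
rewrite c2 divrK ?eta_unit // eq -Gs' => /Ginj /esym /(sing_inj hs' (oner_neq0 D)) [] -> //.
Qed.

Lemma main_sec : exists (phi : S -> S) (mu : S -> D -> D) (eta : S -> D),
    [/\ semigroup_aut mul phi,
        (forall e, e \in E -> ring_aut (mu e)),
        (forall s, s != theta -> eta s \is a GRing.unit)
      & forall (s : Sstar theta) (e f : S), e \in E -> f \in E ->
          val s = mul (mul e (val s)) f ->
          forall d : D, gamma (sing theta (val s) d) = sing theta (phi (val s)) (mu e d * eta (val s))].
Proof.
exists phi, mu, eta; split.
- split; [exact: injF_bij phi_inj | exact: phi_mul].
- exact: MU_aut.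
- exact: eta_unit.
move=> s e f he hf hsd d; apply: MC => //; first exact: (valP s).
have := @sf_left _ _ _ _ Hsf e (val s) f he. move=> /(_ hsd). exact.
Qed.

End Main.

Theorem mainTheorem2 (S : finType) (mul : S -> S -> S) (theta : S) (E : {set S})
  (D : unitRingType) (al : S -> D -> D) (xi : S -> S -> D)
  (be : S -> D -> D) (ze : S -> S -> D)
  (gamma : twisted theta D -> twisted theta D) :
  square_free mul theta E ->
  division_ring D ->
  cocycle2 mul theta al xi -> normal_cocycle E al xi ->
  cocycle2 mul theta be ze -> normal_cocycle E be ze ->
  ring_iso E (tmul mul be ze) (tmul mul al xi) gamma ->
  (forall e, e \in E -> exists2 f, f \in E & gamma (sing theta e 1) = sing theta f 1) ->
  (forall f, f \in E -> exists2 e, e \in E & gamma (sing theta e 1) = sing theta f 1) ->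
  exists (phi : S -> S) (mu : S -> D -> D) (eta : S -> D),
    [/\ semigroup_aut mul phi,
        (forall e, e \in E -> ring_aut (mu e)),
        (forall s, s != theta -> eta s \is a GRing.unit)
      & forall (s : Sstar theta) (e f : S), e \in E -> f \in E ->
          val s = mul (mul e (val s)) f ->
          forall d : D, gamma (sing theta (val s) d) = sing theta (phi (val s)) (mu e d * eta (val s))].
Proof.
move=> Hsf Hdr Hca Hna Hcb Hnb Hiso HE _.
exact: (main_sec Hsf Hdr Hca Hna Hcb Hnb Hiso HE).
Qed.
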